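(* Let $C$ be a right cancellative Möbius category and $R$ a commutative ring with identity. The relation on $C_1$ given by $f\le g$ iff $g=hf$ for some morphism $h$ is a partial order, and the convolution algebra $([C_1,R],\star)$ is isomorphic to the subalgebra of the incidence algebra $[\mathbb{I}_{(C_1,\le)},R]$ consisting of those $\alpha$ with $\alpha[f,gf]=\alpha[1_{tf},g]$ for all composable $f,g$, via the map sending $\beta\in[C_1,R]$ to $\widehat{\beta}$ with $\widehat{\beta}[f,hf]=\beta(h)$.
   Context: $C_1$ is the set of morphisms; $tf$ denotes the target of $f$. A category is Möbius if each morphism $f$ has finitely many proper decompositions (tuples $(f_1,\dots,f_n)$ with $f_n\cdots f_1=f$ and, for $n\ge2$, no $f_i$ an identity). $C$ is right cancellative if $gf=hf$ implies $g=h$. The convolution algebra $[C_1,R]$ has product $(\alpha\star\beta)(f)=\sum_{f_2f_1=f}\alpha(f_1)\beta(f_2)$. The incidence algebra of a locally finite poset $P$ consists of maps on intervals $[a,c]$ ($a\le c$) with $(f\star g)[a,c]=\sum_{a\le b\le c}f[a,b]g[b,c]$. *)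

(* Defs.v *)
From HB Require Import structures.
From mathcomp Require Import all_boot all_order all_algebra.
From Stdlib Require Import List Classical ClassicalEpsilon.
Import GRing.Theory.
Local Open Scope ring_scope.

Record Cat := MkCat {
  Ob : Type;
  Mor : Type;
  src : Mor -> Ob;
  tgt : Mor -> Ob;
  idm : Ob -> Mor;
  cmp : Mor -> Mor -> Mor;         (* cmp g f = g f, meaningful when src g = tgt f *)
  src_id : forall x, src (idm x) = x;
  tgt_id : forall x, tgt (idm x) = x;
  src_comp : forall f g, src g = tgt f -> src (cmp g f) = src f;
  tgt_comp : forall f g, src g = tgt f -> tgt (cmp g f) = tgt g;
  cmp_id_r : forall f, cmp f (idm (src f)) = f;
  comp_id_l : forall f, cmp (idm (tgt f)) f = f;
  comp_assoc : forall f g h, src g = tgt f -> src h = tgt g ->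
      cmp h (cmp g f) = cmp (cmp h g) f
}.

Arguments src {c}. Arguments tgt {c}. Arguments idm {c}. Arguments cmp {c}.

Set Implicit Arguments. Unset Strict Implicit. Unset Printing Implicit Defensive.

Section CatDefs.
Variable C : Cat.

Definition is_id (g : Mor C) : Prop := exists x, g = idm x.

Fixpoint chain (f : Mor C) (l : list (Mor C)) : Prop :=
  match l with
  | nil => True
  | g :: l' => src g = tgt f /\ chain g l'
  end.

(* (f1, ..., fn) is a proper decomposition of f: fn ... f1 = f, and
   for n >= 2 no fi is an identity *)
Definition proper_decomp (f : Mor C) (l : list (Mor C)) : Prop :=
  match l with
  | nil => False
  | f1 :: rest =>
      chain f1 rest /\
      fold_left (fun acc g => cmp g acc) rest f1 = f /\
      (rest <> nil -> forall g, In g l -> ~ is_id g)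
  end.

End CatDefs.

Definition finiteP (A : Type) (P : A -> Prop) : Prop :=
  exists l : list A, forall x, P x <-> In x l.

Definition Mobius (C : Cat) : Prop :=
  forall f : Mor C, finiteP (proper_decomp f).

Definition right_cancellative (C : Cat) : Prop :=
  forall f g h : Mor C, src g = tgt f -> src h = tgt f ->
    cmp g f = cmp h f -> g = h.

Definition mle (C : Cat) (f g : Mor C) : Prop :=
  exists h, src h = tgt f /\ cmp h f = g.

Definition partial_order (A : Type) (r : A -> A -> Prop) : Prop :=
  (forall x, r x x) /\
  (forall x y, r x y -> r y x -> x = y) /\
  (forall x y z, r x y -> r y z -> r x z).

(* ---------- finite sums over finite sets (0 if the set is infinite) ---------- *)
Definition finsum (R : comPzRingType) (A : Type) (P : A -> Prop) (F : A -> R) : R :=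
  match excluded_middle_informative
          (exists l : list A, NoDup l /\ forall x, P x <-> In x l) with
  | left H => \sum_(x <- proj1_sig (constructive_indefinite_description _ H)) F x
  | right _ => 0
  end.

Definition ifP_R (R : comPzRingType) (P : Prop) : R :=
  if excluded_middle_informative P then 1 else 0.

Section Conv.
Variables (C : Cat) (R : comPzRingType).

Definition conv (a b : Mor C -> R) : Mor C -> R := fun f =>
  finsum (fun p : Mor C * Mor C => src p.2 = tgt p.1 /\ cmp p.2 p.1 = f)
         (fun p => a p.1 * b p.2).

Definition conv_one : Mor C -> R := fun f => ifP_R R (is_id f).
Definition conv_add (a b : Mor C -> R) : Mor C -> R := fun f => a f + b f.
Definition conv_scale (r : R) (a : Mor C -> R) : Mor C -> R := fun f => r * a f.
End Conv.

Record Itvl (C : Cat) := Itv { ilo : Mor C; ihi : Mor C; ile : mle ilo ihi }.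

Definition locally_finite (C : Cat) : Prop :=
  forall x z : Mor C, finiteP (fun y => mle x y /\ mle y z).

Section Inc.
Variables (C : Cat) (R : comPzRingType).

Definition inc_mul (a b : Itvl C -> R) : Itvl C -> R := fun i =>
  finsum (fun _ : {y : Mor C | mle (ilo i) y /\ mle y (ihi i)} => True)
         (fun y => a (Itv (proj1 (proj2_sig y))) * b (Itv (proj2 (proj2_sig y)))).

Definition inc_one : Itvl C -> R := fun i => ifP_R R (ilo i = ihi i).
Definition inc_add (a b : Itvl C -> R) : Itvl C -> R := fun i => a i + b i.
Definition inc_scale (r : R) (a : Itvl C -> R) : Itvl C -> R := fun i => r * a i.

Definition inS (a : Itvl C -> R) : Prop :=
  forall (f g : Mor C) (H : src g = tgt f)
         (p : mle f (cmp g f)) (q : mle (idm (tgt f)) g),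
    a (Itv p) = a (Itv q).
End Inc.

(* Main.v *)
Require Import Defs.
From HB Require Import structures.
From mathcomp Require Import all_boot all_order all_algebra.
From Stdlib Require Import List Classical ClassicalEpsilon ProofIrrelevance FunctionalExtensionality Permutation Lia.
Import GRing.Theory.
Local Open Scope ring_scope.
Set Implicit Arguments. Unset Strict Implicit.

Lemma fin_cover (A : Type) (P : A -> Prop) (l : list A) :
  (forall x, P x -> In x l) -> exists l', NoDup l' /\ forall x, P x <-> In x l'.
Proof.
  revert P; induction l as [|a l IH]; intros P HP.
  - exists nil; split; [constructor|]. intros x; split; [apply HP | intros []].
  - destruct (IH (fun x => P x /\ x <> a)) as [l' [Hn Hl']].
    { intros x [Px Hxa]. destruct (HP x Px) as [E|E]; [congruence|assumption]. }
    destruct (classic (P a)) as [Pa|nPa].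
    + exists (a :: l'); split.
      * constructor; [|exact Hn]. intros Hin. apply Hl' in Hin. tauto.
      * intros x; split.
        -- intros Px. destruct (classic (x = a)) as [E|Hne];
             [left; symmetry; exact E|right; apply Hl'; tauto].
        -- intros [E|Hin]; [subst x; exact Pa| apply Hl' in Hin; tauto].
    + exists l'; split; [exact Hn|].
      intros x; split.
      * intros Px; apply Hl'; split; [exact Px| intros E; subst x; tauto].
      * intros Hin; apply Hl' in Hin; tauto.
Qed.

Lemma sum_perm (R : comPzRingType) (A : Type) (F : A -> R) (l1 l2 : list A) :
  Permutation l1 l2 -> \sum_(x <- l1) F x = \sum_(x <- l2) F x.
Proof.
  induction 1.
  - reflexivity.
  - rewrite !big_cons IHPermutation. reflexivity.
  - rewrite !big_cons. by rewrite addrCA.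
  - by rewrite IHPermutation1 IHPermutation2.
Qed.

Lemma sum_map (R : comPzRingType) (A B : Type) (g : A -> B) (F : B -> R) (l : list A) :
  \sum_(x <- List.map g l) F x = \sum_(x <- l) F (g x).
Proof.
  induction l as [|a l IH]; simpl; [by rewrite !big_nil|].
  by rewrite !big_cons IH.
Qed.

Lemma sum_ext_in (R : comPzRingType) (A : Type) (F G : A -> R) (l : list A) :
  (forall x, In x l -> F x = G x) -> \sum_(x <- l) F x = \sum_(x <- l) G x.
Proof.
  induction l as [|a l IH]; intros H; [by rewrite !big_nil|].
  rewrite !big_cons IH; [|intros x Hx; apply H; right; exact Hx].
  by rewrite (H a (or_introl (erefl a))).
Qed.

Lemma finsum_eq (R : comPzRingType) (A : Type) (P : A -> Prop) (F : A -> R) l :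
  NoDup l -> (forall x, P x <-> In x l) -> finsum P F = \sum_(x <- l) F x.
Proof.
  intros Hn Hl. unfold finsum.
  destruct excluded_middle_informative as [H|H]; [|exfalso; apply H; exists l; auto].
  destruct (constructive_indefinite_description _ H) as [l0 [Hn0 Hl0]]; simpl.
  apply sum_perm. apply NoDup_Permutation; auto.
  intros x; split; intro Hx; [apply Hl, Hl0, Hx | apply Hl0, Hl, Hx].
Qed.

Lemma nodup_map_inj (A B : Type) (P : A -> Prop) (g : A -> B) l :
  (forall x y, P x -> P y -> g x = g y -> x = y) -> (forall x, In x l -> P x) ->
  NoDup l -> NoDup (List.map g l).
Proof.
  intros Hinj; induction l as [|a l IH]; intros HP Hn; simpl; [constructor|].
  inversion Hn as [|? ? Hna Hnl]; subst. constructor.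
  - intros Hin. apply in_map_iff in Hin as [y [Hy Hyl]].
    assert (y = a) by (apply Hinj; auto with datatypes). subst y. contradiction.
  - apply IH; auto with datatypes.
Qed.

Lemma finsum_reindex (R : comPzRingType) (A B : Type) (P : A -> Prop) (Q : B -> Prop)
  (F : B -> R) (G : A -> R) (g : A -> B) (l : list A) :
  (forall x, P x -> In x l) ->
  (forall x, P x -> Q (g x)) ->
  (forall x y, P x -> P y -> g x = g y -> x = y) ->
  (forall b, Q b -> exists a, P a /\ g a = b) ->
  (forall x, P x -> F (g x) = G x) ->
  finsum Q F = finsum P G.
Proof.
  intros Hc HPQ Hinj Hsur HFG.
  destruct (fin_cover Hc) as [l' [Hn Hl]].
  rewrite (finsum_eq G Hn Hl).
  assert (Hn2 : NoDup (List.map g l')).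
  { apply (nodup_map_inj (P := P)); auto. intros x Hx; apply Hl, Hx. }
  rewrite (finsum_eq F Hn2).
  - rewrite sum_map. apply sum_ext_in. intros x Hx. apply HFG, Hl, Hx.
  - intros b; split.
    + intros Qb. destruct (Hsur b Qb) as [a [Pa E]]. subst b.
      apply in_map, Hl, Pa.
    + intros Hin. apply in_map_iff in Hin as [a [E Ha]]. subst b.
      apply HPQ, Hl, Ha.
Qed.

Lemma sig_cover (A : Type) (Q : A -> Prop) (l : list A) :
  (forall x, Q x -> In x l) -> exists l' : list {x | Q x}, forall y, In y l'.
Proof.
  intros HQ.
  assert (K : exists l' : list {x | Q x}, forall y, In (proj1_sig y) l -> In y l').
  { clear HQ. induction l as [|a l IH].
    - exists nil. intros y [].
    - destruct IH as [l1 Hl1]. destruct (classic (Q a)) as [Qa|nQa].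
      + exists (exist _ a Qa :: l1). intros [y Hy] Hin. simpl in Hin.
        destruct Hin as [E|Hin].
        * left. subst y. f_equal. apply proof_irrelevance.
        * right. apply (Hl1 (exist _ y Hy)). exact Hin.
      + exists l1. intros [y Hy] Hin. simpl in Hin.
        destruct Hin as [E|Hin]; [subst y; contradiction|].
        apply (Hl1 (exist _ y Hy)). exact Hin. }
  destruct K as [l' Hl']. exists l'. intros y. apply Hl', HQ, (proj2_sig y).
Qed.

Lemma sig_ext (A : Type) (Q : A -> Prop) (x y : {x | Q x}) :
  proj1_sig x = proj1_sig y -> x = y.
Proof.
  destruct x as [x Hx], y as [y Hy]; simpl; intros E; subst y.
  f_equal; apply proof_irrelevance.
Qed.

Lemma ifP_iff (R : comPzRingType) (P Q : Prop) : (P <-> Q) -> ifP_R R P = ifP_R R Q.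
Proof.
  intros H; unfold ifP_R.
  destruct (excluded_middle_informative P), (excluded_middle_informative Q); try reflexivity; exfalso; tauto.
Qed.

Lemma tgtC (C : Cat) (f g : Mor C) : src g = tgt f -> tgt (cmp g f) = tgt g.
Proof. apply tgt_comp. Qed.
Lemma srcC (C : Cat) (f g : Mor C) : src g = tgt f -> src (cmp g f) = src f.
Proof. apply src_comp. Qed.
Lemma assocC (C : Cat) (f g h : Mor C) : src g = tgt f -> src h = tgt g ->
      cmp h (cmp g f) = cmp (cmp h g) f.
Proof. apply comp_assoc. Qed.

Definition wit (C : Cat) (f g : Mor C) (H : mle f g) : Mor C :=
  proj1_sig (constructive_indefinite_description _ H).

Lemma wit_spec (C : Cat) (f g : Mor C) (H : mle f g) :
  src (wit H) = tgt f /\ cmp (wit H) f = g.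
Proof. unfold wit. destruct (constructive_indefinite_description _ H) as [w Hw]; exact Hw. Qed.

Lemma wit_eq (C : Cat) (HRC : right_cancellative C) (f g : Mor C) (p : mle f g) (h : Mor C) :
  src h = tgt f -> cmp h f = g -> wit p = h.
Proof.
  intros H1 H2. destruct (wit_spec p) as [W1 W2].
  apply (HRC f); auto. rewrite W2 H2. reflexivity.
Qed.

Lemma id_le (C : Cat) (h : Mor C) : mle (idm (src h)) h.
Proof. exists h. split; [by rewrite tgt_id | apply cmp_id_r]. Qed.

Lemma Itv_eq (C : Cat) (lo lo' hi hi' : Mor C) (p : mle lo hi) (p' : mle lo' hi') :
  lo = lo' -> hi = hi' -> Itv p = Itv p'.
Proof. intros E1 E2. subst lo' hi'. f_equal. apply proof_irrelevance. Qed.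

Lemma inS_use (C : Cat) (R : comPzRingType) (a : Itvl C -> R) (Ha : inS a)
  (lo hi m lo2 : Mor C) (p : mle lo hi) (q : mle lo2 m) :
  src m = tgt lo -> hi = cmp m lo -> lo2 = idm (tgt lo) -> a (Itv p) = a (Itv q).
Proof. intros H E1 E2. subst hi lo2. apply Ha; exact H. Qed.

Fixpoint rep (C : Cat) (h k : Mor C) (n : nat) : list (Mor C) :=
  match n with O => nil | S n => h :: k :: rep h k n end.

Lemma list_len_bound (A : Type) (L : list (list A)) (x : list A) :
  In x L -> (length x <= list_sum (List.map (@length A) L))%coq_nat.
Proof.
  induction L as [|a L IH]; simpl; [intros []|].
  intros [E|Hin]; [subst; lia| specialize (IH Hin); lia].
Qed.

Lemma inv_id (C : Cat) (HM : Mobius C) (h k : Mor C) :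
  src k = tgt h -> cmp k h = idm (src h) -> is_id h.
Proof.
  intros Hkh E. set (x := src h) in *.
  assert (Htk : tgt k = x).
  { rewrite -(tgtC Hkh) E tgt_id. reflexivity. }
  apply NNPP. intros nh.
  assert (nk : ~ is_id k).
  { intros [o Ho]. apply nh. exists (tgt h).
    rewrite Ho in E. assert (o = tgt h) by (rewrite -Hkh Ho src_id; reflexivity).
    subst o. rewrite comp_id_l in E. rewrite E tgt_id. reflexivity. }

  assert (Hfold : forall n acc, tgt acc = x ->
     fold_left (fun acc g => cmp g acc) (rep h k n) acc = acc).
  { induction n as [|n IH]; intros acc Ha; [reflexivity|].
    simpl. rewrite (assocC (f:=acc) (g:=h) (h:=k)); [|unfold x in Ha; congruence|exact Hkh].
    rewrite E. fold x. rewrite -Ha comp_id_l. apply IH. exact Ha. }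
  assert (Hchain : forall n, chain k (rep h k n)).
  { induction n as [|n IH]; simpl; [exact I|]. split; [fold x; congruence|]. split; [exact Hkh|exact IH]. }
  assert (Hin : forall n g, In g (rep h k n) -> g = h \/ g = k).
  { induction n as [|n IH]; simpl; intros g; [intros []|].
    intros [E1|[E1|E1]]; [left; auto|right; auto|apply IH; exact E1]. }
  assert (Hlen : forall n, length (rep h k n) = (2 * n)%coq_nat).
  { induction n as [|n IH]; simpl; [reflexivity|]. rewrite IH. lia. }
  assert (Hpd : forall n, proper_decomp (idm x) (rep h k (S n))).
  { intros n. simpl. split; [split; [exact Hkh| apply Hchain]|]. split.
    - simpl. rewrite E. apply Hfold. fold x. apply tgt_id.
    - intros _ g Hg. destruct Hg as [E1|Hg]; [subst g; exact nh|].
      destruct Hg as [E1|Hg]; [subst g; exact nk|].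
      destruct (Hin n g Hg) as [E1|E1]; subst g; assumption. }
  destruct (HM (idm x)) as [L HL].
  set (N := list_sum (List.map (@length (Mor C)) L)).
  pose proof (list_len_bound (proj1 (HL _) (Hpd N))) as B.
  rewrite Hlen in B. fold N in B. lia.
Qed.

Lemma mle_po (C : Cat) (HM : Mobius C) (HRC : right_cancellative C) :
  partial_order (@mle C).
Proof.
  split; [|split].
  - intros f. exists (idm (tgt f)). split; [apply src_id|apply comp_id_l].
  - intros f g [h [Hh E1]] [k [Hk E2]].
    assert (Hsk : src k = tgt h) by (rewrite Hk -E1 (tgtC Hh); reflexivity).
    assert (Ekh : cmp k h = idm (src h)).
    { apply (HRC f).
      - rewrite (srcC Hsk). exact Hh.
      - rewrite src_id. exact Hh.
      - rewrite -(assocC Hh Hsk) E1 E2. rewrite Hh comp_id_l. reflexivity. }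
    destruct (inv_id HM Hsk Ekh) as [o Ho].
    rewrite -E1 Ho. assert (o = tgt f) by (rewrite -Hh Ho src_id; reflexivity). subst o.
    symmetry; apply comp_id_l.
  - intros x y z [a [Ha E1]] [b [Hb E2]]. exists (cmp b a). split.
    + rewrite (srcC (f:=a) (g:=b)); [exact Ha|]. rewrite Hb -E1 (tgtC Ha). reflexivity.
    + rewrite -(assocC Ha); [rewrite E1; exact E2|]. rewrite Hb -E1 (tgtC Ha). reflexivity.
Qed.

Lemma is_id_eq (C : Cat) (g : Mor C) : is_id g -> g = idm (src g) /\ g = idm (tgt g).
Proof. intros [o Ho]. subst g. rewrite src_id tgt_id. auto. Qed.

Lemma lf (C : Cat) (HM : Mobius C) : locally_finite C.
Proof.
  intros x z. destruct (HM z) as [L HL].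
  destruct (fin_cover (P := fun y => mle x y /\ mle y z)
    (l := z :: idm (src z) :: List.map (fun l => match l with a :: _ => a | nil => z end) L))
    as [l' [_ Hl']].
  - intros y [_ [b [Hb E]]].
    destruct (classic (is_id b)) as [Ib|nb].
    { left. destruct (is_id_eq Ib) as [E1 _]. rewrite -E E1 Hb comp_id_l. reflexivity. }
    destruct (classic (is_id y)) as [Iy|ny].
    { right; left. destruct (is_id_eq Iy) as [E1 _]. rewrite -E (srcC Hb). symmetry; exact E1. }
    right; right. apply in_map_iff. exists (y :: b :: nil). split; [reflexivity|].
    apply HL. simpl. split; [split; [exact Hb|exact I]|]. split; [exact E|].
    intros _ g [E1|[E1|[]]]; subst g; assumption.
  - exists l'. exact Hl'.
Qed.

Definition Phi (C : Cat) (R : comPzRingType) (beta : Mor C -> R) (i : Itvl C) : R :=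
  beta (wit (ile i)).

Lemma shift_le (C : Cat) (f g u : Mor C) :
  mle (idm (tgt f)) u -> mle u g -> mle f (cmp u f) /\ mle (cmp u f) (cmp g f).
Proof.
  intros [w [Hw E1]] [v [Hv E2]].
  rewrite tgt_id in Hw.
  assert (Hu : src u = tgt f) by (rewrite -E1 (srcC (f := idm (tgt f))); [apply src_id| by rewrite tgt_id]).
  split.
  - exists u. split; [exact Hu|reflexivity].
  - exists v. split; [rewrite (tgtC Hu); exact Hv|].
    rewrite (assocC Hu Hv) E2. reflexivity.
Qed.

Lemma le_id_src (C : Cat) (f u : Mor C) : mle (idm (tgt f)) u -> src u = tgt f.
Proof.
  intros [w [Hw E1]]. rewrite tgt_id in Hw.
  rewrite -E1 (srcC (f := idm (tgt f))); [apply src_id| by rewrite tgt_id].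
Qed.

Theorem theorem7p4 (C : Cat) (R : comPzRingType)
  (HM : Mobius C) (HRC : right_cancellative C) :
  partial_order (@mle C) /\ locally_finite C /\
  (* the set S is a subalgebra of the incidence algebra *)
  ((forall a b : Itvl C -> R, inS a -> inS b -> inS (inc_add a b)) /\
   (forall (r : R) (a : Itvl C -> R), inS a -> inS (inc_scale r a)) /\
   (forall a b : Itvl C -> R, inS a -> inS b -> inS (inc_mul a b)) /\
   inS (@inc_one C R)) /\
  (* beta |-> beta^ is an algebra isomorphism from [C_1,R] onto S *)
  exists Phi : (Mor C -> R) -> (Itvl C -> R),
    (forall (beta : Mor C -> R) (f h : Mor C) (H : src h = tgt f)
            (p : mle f (cmp h f)), Phi beta (Itv p) = beta h) /\
    (forall b1 b2, Phi b1 = Phi b2 -> b1 = b2) /\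
    (forall beta, inS (Phi beta)) /\
    (forall alpha, inS alpha -> exists beta, Phi beta = alpha) /\
    (forall b1 b2, Phi (conv_add b1 b2) = inc_add (Phi b1) (Phi b2)) /\
    (forall (r : R) b, Phi (conv_scale r b) = inc_scale r (Phi b)) /\
    (forall b1 b2, Phi (conv b1 b2) = inc_mul (Phi b1) (Phi b2)) /\
    Phi (@conv_one C R) = @inc_one C R.
Proof.
  have LF := lf HM.
  split; [exact (mle_po HM HRC)|]. split; [exact LF|]. split.
  { split; [|split; [|split]].
    - intros a b Ha Hb f g H p q. unfold inc_add. rewrite (Ha f g H p q) (Hb f g H p q). reflexivity.
    - intros r a Ha f g H p q. unfold inc_scale. rewrite (Ha f g H p q). reflexivity.
    - intros a b Ha Hb f g H p q. unfold inc_mul. cbn [ilo ihi].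
      set (A := {y : Mor C | mle (idm (tgt f)) y /\ mle y g}).
      assert (K : forall u : A, mle f (cmp (proj1_sig u) f) /\ mle (cmp (proj1_sig u) f) (cmp g f)).
      { intros [u [P1 P2]]. exact (shift_le P1 P2). }
      destruct (LF (idm (tgt f)) g) as [l0 Hl0].
      destruct (@sig_cover _ (fun y => mle (idm (tgt f)) y /\ mle y g) l0) as [l Hl].
      { intros y Hy. apply Hl0, Hy. }
      apply (@finsum_reindex _ _ _ (fun _ : A => True) _ _ _
                (fun u : A => exist _ (cmp (proj1_sig u) f) (K u)) l).
      + intros x _; apply Hl.
      + intros; exact I.
      + intros [x [X1 X2]] [y [Y1 Y2]] _ _ E. apply sig_ext. simpl.
        apply (f_equal (@proj1_sig _ _)) in E. simpl in E.
        apply (HRC f); [exact (le_id_src X1)|exact (le_id_src Y1)|exact E].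
      + intros [y [P1 P2]] _. destruct (wit_spec P1) as [W1 W2].
        destruct (wit_spec P2) as [V1 V2].
        assert (Q1 : mle (idm (tgt f)) (wit P1)).
        { exists (wit P1). split; [rewrite tgt_id; exact W1|]. rewrite -W1. apply cmp_id_r. }
        assert (Hvu : src (wit P2) = tgt (wit P1)) by (rewrite V1; transitivity (tgt (cmp (wit P1) f)); [by rewrite W2 | apply tgtC; exact W1]).
        assert (Q2 : mle (wit P1) g).
        { exists (wit P2). split; [exact Hvu|]. apply (HRC f).
          - rewrite (srcC Hvu). exact W1.
          - exact H.
          - rewrite -(assocC W1 Hvu) W2 V2. reflexivity. }
        exists (exist _ (wit P1) (conj Q1 Q2)). split; [exact I|].
        apply sig_ext; simpl; exact W2.
      + intros [u [P1 P2]] _. simpl. f_equal.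
        * apply (inS_use Ha (m := u)); [exact (le_id_src P1)|reflexivity|reflexivity].
        * destruct (wit_spec P2) as [V1 V2].
          have Hu := le_id_src P1.
          transitivity (b (Itv (id_le (wit P2)))).
          -- apply (inS_use Hb (m := wit P2)).
             ++ rewrite (tgtC Hu). exact V1.
             ++ rewrite (assocC Hu V1) V2. reflexivity.
             ++ rewrite V1 (tgtC Hu). reflexivity.
          -- symmetry. apply (inS_use Hb (m := wit P2)); [exact V1|symmetry; exact V2|rewrite V1; reflexivity].
    - intros f g H p q. unfold inc_one. simpl. apply ifP_iff. split.
      + intros E. apply (HRC f).
        * rewrite src_id. reflexivity.
        * exact H.
        * rewrite comp_id_l. exact E.
      + intros E. subst g. rewrite comp_id_l. reflexivity. }
  exists (@Phi C R). split; [|split; [|split; [|split; [|split; [|split; [|split]]]]]].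
  - intros beta f h H p. unfold Phi. simpl. f_equal. apply (wit_eq HRC); auto.
  - intros b1 b2 E. apply functional_extensionality. intros h.
    have := f_equal (fun F => F (Itv (id_le h))) E. unfold Phi. simpl.
    rewrite (wit_eq HRC (id_le h) (h := h)); [auto| |apply cmp_id_r].
    rewrite tgt_id. reflexivity.
  - intros beta f g H p q. unfold Phi. simpl.
    rewrite (wit_eq HRC p (h := g)) //. rewrite (wit_eq HRC q (h := g)) //.
    + rewrite tgt_id. exact H.
    + rewrite -H. apply cmp_id_r.
  - intros alpha Ha. exists (fun h => alpha (Itv (id_le h))).
    apply functional_extensionality. intros [lo hi pr]. unfold Phi. simpl.
    destruct (wit_spec pr) as [W1 W2].
    symmetry. apply (inS_use Ha (m := wit pr)); auto. rewrite W1. reflexivity.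
  - intros b1 b2. reflexivity.
  - intros r b. reflexivity.
  - intros b1 b2. apply functional_extensionality. intros [lo hi pr].
    unfold Phi at 1. unfold conv, inc_mul. cbn [ile ilo ihi].
    destruct (wit_spec pr) as [W1 W2].
    destruct (LF lo hi) as [l0 Hl0].
    destruct (@sig_cover _ (fun y => mle lo y /\ mle y hi) l0) as [l Hl].
    { intros y Hy. apply Hl0, Hy. }
    apply (@finsum_reindex _ _ _ (fun _ : {y | mle lo y /\ mle y hi} => True) _ _ _
      (fun y => (wit (proj1 (proj2_sig y)), wit (proj2 (proj2_sig y)))) l).
    + intros x _; apply Hl.
    + intros [y Py] _. simpl. set (P1 := proj1 Py). set (P2 := proj2 Py). destruct (wit_spec P1) as [U1 U2].
      destruct (wit_spec P2) as [V1 V2].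
      assert (Hvu : src (wit P2) = tgt (wit P1)) by (rewrite V1; transitivity (tgt (cmp (wit P1) lo)); [by rewrite U2 | apply tgtC; exact U1]).
      split; [exact Hvu|].
      apply (HRC lo); [rewrite (srcC Hvu); exact U1|exact W1|].
      rewrite -(assocC U1 Hvu) U2 V2 W2. reflexivity.
    + intros [x Px] [y Py] _ _ E. simpl in E. injection E as E1 E2.
      apply sig_ext; simpl. destruct (wit_spec (proj1 Px)) as [_ XU]. destruct (wit_spec (proj1 Py)) as [_ YU].
      rewrite -XU -YU E1. reflexivity.
    + intros [p1 p2] [Hs Hc]. simpl in Hs, Hc.
      assert (Hp1 : src p1 = tgt lo) by (rewrite -(srcC Hs) Hc; exact W1).
      assert (Q1 : mle lo (cmp p1 lo)) by (exists p1; split; [exact Hp1|reflexivity]).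
      assert (Q2 : mle (cmp p1 lo) hi).
      { exists p2; split; [rewrite (tgtC Hp1); exact Hs|]. rewrite (assocC Hp1 Hs) Hc; exact W2. }
      exists (exist _ (cmp p1 lo) (conj Q1 Q2)). split; [exact I|]. simpl. f_equal.
      * apply (wit_eq HRC); [exact Hp1|reflexivity].
      * apply (wit_eq HRC); [rewrite (tgtC Hp1); exact Hs| rewrite (assocC Hp1 Hs) Hc; exact W2].
    + intros y _. reflexivity.
  - apply functional_extensionality. intros [lo hi pr]. unfold Phi, conv_one, inc_one. simpl.
    destruct (wit_spec pr) as [W1 W2]. apply ifP_iff. split.
    + intros [o Ho]. rewrite -W2. rewrite Ho.
      assert (o = tgt lo) by (rewrite -W1 Ho src_id; reflexivity). subst o.
      rewrite comp_id_l. reflexivity.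
    + intros E. exists (tgt lo). apply (HRC lo); [exact W1|apply src_id|].
      rewrite W2 comp_id_l. symmetry; exact E.
Qed.
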